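(* Let $P$ be a finite set of points in the plane in general position with $|P|$ even, and let $A\subseteq P$ be the union of the vertex sets of some connected components of the underlying graph of $P$. Then $|A|$ is even, and for any two points $a,b\in A$, the line through $a$ and $b$ is a halving line of the point set $A$ if and only if it is a halving line of $P$. Equivalently, the underlying graph of the point set $A$ equals the subgraph of the underlying graph of $P$ induced on $A$.
   Context: Points are in general position if no three are collinear. For a finite set $P$ of $n$ points in general position with $n$ even, a halving line of $P$ is a line through two points of $P$ that has exactly $(n-2)/2$ points of $P$ strictly on each side. The underlying graph of $P$ has vertex set $P$, and two points are adjacent if and only if the line through them is a halving line of $P$. *)

(* Defs.v *)
From HB Require Import structures.
From mathcomp Require Import all_boot all_order all_algebra.
Set Implicit Arguments. Unset Strict Implicit. Unset Printing Implicit Defensive.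
Import Order.TTheory GRing.Theory Num.Theory.

Local Open Scope ring_scope.

Section Planar.
Variable R : realFieldType.
Definition point := (R * R)%type.

(* Orientation determinant: > 0 iff r is strictly to the left of the directed
   line a -> b, < 0 iff strictly to the right, = 0 iff a, b, r collinear. *)
Definition orient (a b r : point) : R :=
  (b.1 - a.1) * (r.2 - a.2) - (b.2 - a.2) * (r.1 - a.1).

Definition general_position (P : seq point) : Prop :=
  forall p q r, p \in P -> q \in P -> r \in P ->
    p != q -> q != r -> p != r -> orient p q r != 0.

Definition halving (P : seq point) (a b : point) : bool :=
  [&& a \in P, b \in P, a != b,
      count (fun r => 0 < orient a b r) P == ((size P - 2) %/ 2)%N &
      count (fun r => orient a b r < 0) P == ((size P - 2) %/ 2)%N].

Definition adj (P : seq point) : rel point := fun a b => halving P a b.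

Definition connected_in (P : seq point) (x y : point) : Prop :=
  x \in P /\ exists s : seq point, path (adj P) x s /\ last x s = y.

(* A (a subset of P) is a union of vertex sets of connected components of the
   underlying graph of P: it is closed under being in the same component. *)
Definition union_of_components (P A : seq point) : Prop :=
  {subset A <= P} /\ forall x y, x \in A -> connected_in P x y -> y \in A.
End Planar.

(* Main.v *)
Require Import Defs.
From HB Require Import structures.
From mathcomp Require Import all_boot all_order all_algebra.
From mathcomp Require Import zify ring lra.
From Stdlib Require Import Classical.
Import Order.TTheory GRing.Theory Num.Theory.
Set Implicit Arguments. Unset Strict Implicit.
Section CountHelpers.
Variable T : eqType.

Lemma count_exc (s : seq T) (p q : pred T) (e : T) :
  uniq s -> e \in s -> p e -> ~~ q e ->
  (forall x, x \in s -> x != e -> p x = q x) ->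
  count p s = (count q s).+1.
Proof.
elim: s => [//|a s IH] /= /andP [ans us] ein pe qe H.
case: (eqVneq a e) => [ae|ane].
- subst a. rewrite pe (negbTE qe) /= add0n add1n; congr _.+1.
  apply: eq_in_count => x xs; apply: H; first by rewrite inE xs orbT.
  by apply/eqP => xe; subst x; rewrite xs in ans.
- move: ein; rewrite inE eq_sym (negbTE ane) /= => ein.
  rewrite (H a (mem_head _ _) ane) IH // ?addnS // => x xs; apply: H.
  by rewrite inE xs orbT.
Qed.

Lemma count_le_in (s : seq T) (p q : pred T) :
  (forall x, x \in s -> q x -> p x) -> (count q s <= count p s)%N.
Proof.
elim: s => [//|a s IH] H /=.
apply: leq_add; last by apply: IH => x xs; apply: H; rewrite inE xs orbT.
by case qa: (q a) => //; rewrite (H a (mem_head _ _) qa).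
Qed.

Lemma count_lt_in (s : seq T) (p q : pred T) (e : T) :
  e \in s -> p e -> ~~ q e ->
  (forall x, x \in s -> q x -> p x) -> (count q s < count p s)%N.
Proof.
elim: s => [//|a s IH] ein pe qe H /=.
have H' : forall x, x \in s -> q x -> p x by move=> x xs; apply: H; rewrite inE xs orbT.
case: (eqVneq a e) => [ae|ane].
- subst a. rewrite pe (negbTE qe) /= add0n add1n ltnS. exact: count_le_in.
- move: ein; rewrite inE eq_sym (negbTE ane) /= => ein.
  rewrite -addnS; apply: leq_add; last exact: IH.
  by case qa: (q a) => //; rewrite (H a (mem_head _ _) qa).
Qed.

End CountHelpers.

Local Open Scope ring_scope.

Lemma count_tri (R : realFieldType) (T : Type) (f : T -> R) (z : T) (s : seq T) :
  addn (addn (count (fun y => f y < f z) s) (count (fun y => f z < f y) s))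
   (count (fun y => f y == f z) s) = size s.
Proof.
elim: s => [//|a s IH] /=.
rewrite -IH.
case: (ltgtP (f a) (f z)) => /= _; lia.
Qed.

Lemma affine_root (R : realFieldType) (be de t0 t1 : R) :
  t0 < t1 -> be + t0 * de != 0 -> be + t1 * de != 0 ->
  (be + t0 * de < 0) != (be + t1 * de < 0) ->
  exists r, [/\ t0 < r, r < t1 & be + r * de = 0].
Proof.
move=> lt01 n0 n1 ch.
have dn : de != 0.
  by apply: contra ch => /eqP ->; rewrite !mulr0.
set r := - be / de.
have E : forall t, be + t * de = (t - r) * de.
  by move=> t; rewrite /r; field.
exists r; split; last by rewrite E subrr mul0r.
- rewrite ltNge; apply/negP => rle.
  have a0 : 0 < t0 - r by rewrite subr_gt0 lt_neqAle rle andbT; apply: contra n0 => /eqP <-; rewrite E subrr mul0r.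
  have a1 : 0 < t1 - r by rewrite subr_gt0 (le_lt_trans rle lt01).
  by move: ch; rewrite !E !(mulrC _ de) (pmulr_llt0 _ a0) (pmulr_llt0 _ a1) eqxx.
- rewrite ltNge; apply/negP => rle.
  have a1 : t1 - r < 0 by rewrite subr_lt0 lt_neqAle rle andbT; apply: contra n1 => /eqP ->; rewrite E subrr mul0r.
  have a0 : t0 - r < 0 by rewrite subr_lt0 (lt_le_trans lt01 rle).
  by move: ch; rewrite !E !(mulrC _ de) (nmulr_llt0 _ a0) (nmulr_llt0 _ a1) eqxx.
Qed.

Definition lin (R : realFieldType) (g : R * R) (x : point R) : R := g.1 * x.1 + g.2 * x.2.
Arguments lin {R}.

Lemma collinear_of (R : realFieldType) (g : R * R) (z w s : point R) :
  (g.1 != 0) || (g.2 != 0) -> lin g z = lin g w -> lin g z = lin g s ->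
  orient z w s = 0.
Proof.
case: g => g1 g2; case: z => z1 z2; case: w => w1 w2; case: s => s1 s2.
rewrite /lin /orient /= => gnz e1 e2.
have h1 : g1 * (w1 - z1) + g2 * (w2 - z2) = 0 by apply: (@eq_trans _ _ ((g1*w1+g2*w2) - (g1*z1+g2*z2))); [ring | rewrite e1 subrr].
have h2 : g1 * (s1 - z1) + g2 * (s2 - z2) = 0 by apply: (@eq_trans _ _ ((g1*s1+g2*s2) - (g1*z1+g2*z2))); [ring | rewrite e2 subrr].
case/orP: gnz => gn.
- apply: (mulfI gn); rewrite mulr0.
  have -> : g1 * ((w1 - z1) * (s2 - z2) - (w2 - z2) * (s1 - z1)) =
    (s2 - z2) * (g1 * (w1 - z1) + g2 * (w2 - z2)) - (w2 - z2) * (g1 * (s1 - z1) + g2 * (s2 - z2)) by ring.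
  by rewrite h1 h2; ring.
- apply: (mulfI gn); rewrite mulr0.
  have -> : g2 * ((w1 - z1) * (s2 - z2) - (w2 - z2) * (s1 - z1)) =
    (w1 - z1) * (g1 * (s1 - z1) + g2 * (s2 - z2)) - (s1 - z1) * (g1 * (w1 - z1) + g2 * (w2 - z2)) by ring.
  by rewrite h1 h2; ring.
Qed.

Lemma kappa_of (R : realFieldType) (g : R * R) (z w : point R) :
  (g.1 != 0) || (g.2 != 0) -> z != w -> lin g z = lin g w ->
  exists k, k != 0 /\ forall s, lin g s - lin g z = k * orient z w s.
Proof.
case: g => g1 g2; case: z => z1 z2; case: w => w1 w2.
rewrite /lin /orient /= => gnz zw e1.
have h1 : g1 * (w1 - z1) + g2 * (w2 - z2) = 0 by apply: (@eq_trans _ _ ((g1*w1+g2*w2) - (g1*z1+g2*z2))); [ring | rewrite e1 subrr].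
case: (eqVneq (w1 - z1) 0) => [u10|u1n].
- have u2n : w2 - z2 != 0.
    apply: contra zw => /eqP u2; apply/eqP; congr pair; apply/eqP;
      rewrite eq_sym -subr_eq0; apply/eqP; [exact u10 | exact u2].
  exists (- g1 / (w2 - z2)); split.
  + rewrite mulf_neq0 // ?invr_eq0 // oppr_eq0; apply: contraTneq gnz => g10.
    move: h1; rewrite g10 mul0r add0r => /eqP; rewrite mulf_eq0 (negbTE u2n) orbF => /eqP ->.
    by rewrite ?eqxx.
  + case=> s1 s2 /=. apply: (mulfI u2n).
    rewrite [in RHS]mulrA [in RHS](mulrC (_ - _)) [in RHS]divfK //.
    have -> : (w2 - z2) * (g1 * s1 + g2 * s2 - (g1 * z1 + g2 * z2)) =
      (s2 - z2) * (g1 * (w1 - z1) + g2 * (w2 - z2)) - g1 * ((w1 - z1) * (s2 - z2) - (w2 - z2) * (s1 - z1)) by ring.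
    by rewrite h1; ring.
- exists (g2 / (w1 - z1)); split.
  + rewrite mulf_neq0 // ?invr_eq0 //; apply: contraTneq gnz => g20.
    move: h1; rewrite g20 mul0r addr0 => /eqP; rewrite mulf_eq0 (negbTE u1n) orbF => /eqP ->.
    by rewrite ?eqxx.
  + case=> s1 s2 /=. apply: (mulfI u1n).
    rewrite [in RHS]mulrA [in RHS](mulrC (_ - _)) [in RHS]divfK //.
    have -> : (w1 - z1) * (g1 * s1 + g2 * s2 - (g1 * z1 + g2 * z2)) =
      (s1 - z1) * (g1 * (w1 - z1) + g2 * (w2 - z2)) + g2 * ((w1 - z1) * (s2 - z2) - (w2 - z2) * (s1 - z1)) by ring.
    by rewrite h1; ring.
Qed.

Local Open Scope ring_scope.

Section Main.
Variable R : realFieldType.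
Variables P A : seq (point R).
Hypothesis uP : uniq P.
Hypothesis gp : general_position P.
Hypothesis evP : ~~ odd (size P).
Hypothesis uA : uniq A.
Hypothesis uc : union_of_components P A.

Definition gen (f : point R -> R) :=
  forall p q, p \in P -> q \in P -> p != q -> f p != f q.
Definition rk (f : point R -> R) z := count (fun s => f s < f z) P.
Definition hh := (size P)./2.
Definition cA (f : point R -> R) := count (fun z => (rk f z < hh)%N) A.
Definition det (g g' : R * R) := g.1 * g'.2 - g.2 * g'.1.

Lemma AsubP : {subset A <= P}. Proof. by case: uc. Qed.

Lemma sizeP2 : size P = (2 * hh)%N.
Proof. rewrite /hh; move: evP; rewrite -{1}(odd_double_half (size P)); case: (odd _) => //= _; lia. Qed.

Lemma rk_ext f f' : f =1 f' -> forall z, rk f z = rk f' z.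
Proof. by move=> E z; apply: eq_count => s; rewrite !E. Qed.

Lemma cA_ext f f' : f =1 f' -> cA f = cA f'.
Proof. by move=> E; apply: eq_count => z; rewrite (rk_ext E). Qed.

Lemma rk_mono f y z : gen f -> y \in P -> z \in P -> f y < f z -> (rk f y < rk f z)%N.
Proof.
move=> gf yP zP lt; apply: (@count_lt_in _ _ _ _ y) => //; first by rewrite ltxx.
by move=> s _ h; apply: lt_trans h lt.
Qed.

Lemma rk_inj f y z : gen f -> y \in P -> z \in P -> rk f y = rk f z -> y = z.
Proof.
move=> gf yP zP E; apply/eqP; apply/negP => /negP yz.
have := gf _ _ yP zP yz; case: (ltgtP (f y) (f z)) => // lt _.
- by have := rk_mono gf yP zP lt; rewrite E ltnn.
- by have := rk_mono gf zP yP lt; rewrite E ltnn.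
Qed.

Lemma count_eq1 f z : gen f -> z \in P -> count (fun s => f s == f z) P = 1%N.
Proof.
move=> gf zP; transitivity (count_mem z P); last by rewrite count_uniq_mem // zP.
apply: eq_in_count => s sP /=.
case: (eqVneq s z) => [->|sz]; first by rewrite eqxx.
by rewrite (negbTE (gf _ _ sP zP sz)).
Qed.

Lemma rk_up f z : gen f -> z \in P ->
  addn (rk f z) (count (fun s => f z < f s) P) = (size P).-1.
Proof.
move=> gf zP; have := count_tri f z P; rewrite (count_eq1 gf zP) /rk.
have : (0 < size P)%N by case: (P) zP.
lia.
Qed.

Lemma gen_neg f : gen f -> gen (fun x => - f x).
Proof. by move=> gf p q pP qP pq; rewrite eqr_opp; apply: gf. Qed.

Lemma cA_neg f : gen f -> cA (fun x => - f x) = (size A - cA f)%N.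
Proof.
move=> gf; rewrite /cA -(count_predC (fun z => (rk f z < hh)%N) A) addKn.
apply: eq_in_count => z zA /=; have zP := AsubP zA.
have E : rk (fun x => - f x) z = count (fun s => f z < f s) P.
  by apply: eq_count => s; rewrite ltrN2.
rewrite E /=; have H1 := rk_up gf zP; have H2 := sizeP2.
have H3 : (0 < size P)%N by case: (P) zP.
move: H1 H2 H3; move: (rk f z) (count (fun s => f z < f s) P) => a c.
case: (ltnP a hh); case: (ltnP c hh) => //=; lia.
Qed.


Lemma arith_hv (a c n h : nat) : addn (addn a c) 2 = n -> n = (2*h)%N -> a.+1 = h ->
  a = ((n - 2) %/ 2)%N /\ c = ((n - 2) %/ 2)%N.
Proof. lia. Qed.

Lemma ltS_ne (a h : nat) : a.+1 != h -> (a.+1 < h)%N = (a < h)%N.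
Proof. move=> /eqP ne; apply/idP/idP => H; lia. Qed.

Lemma arith2 (x y n : nat) : addn (addn x y) 2 = n -> ~~ odd n ->
  ((y == ((n-2)%/2)%N) && (x == ((n-2)%/2)%N)) = (x == ((n-2)%/2)%N).
Proof.
move=> E od; have h2 : n = (2 * (n %/ 2))%N.
  by rewrite {1}(divn_eq n 2) modn2 (negbTE od) addn0 mulnC.
case: (eqVneq x (((n-2)%/2)%N)) => hx; case: (eqVneq y (((n-2)%/2)%N)) => hy //=;
  try move/eqP in hx; try move/eqP in hy; lia.
Qed.
Lemma arith3 (L h lo k nP nA : nat) : nP = (2*h)%N -> nA = (2*k)%N -> (0 < k)%N -> (0 < h)%N ->
  (L.+1 = h -> k = lo.+1) -> ((L.+1 < h)%N -> (lo.+2 <= k)%N) -> ((h <= L)%N -> (k <= lo)%N) ->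
  (lo == ((nA-2)%/2)%N) = (L == ((nP-2)%/2)%N).
Proof.
move=> E1 E2 k0 h0 H1 H2 H3.
case: (ltngtP L.+1 h) => H.
- have := H2 H; case: eqVneq => e1; case: eqVneq => e2 //=; try move/eqP in e1; try move/eqP in e2; lia.
- have := H3 H; case: eqVneq => e1; case: eqVneq => e2 //=; try move/eqP in e1; try move/eqP in e2; lia.
- have := H1 H; case: eqVneq => e1; case: eqVneq => e2 //=; try move/eqP in e1; try move/eqP in e2; lia.
Qed.

Lemma orient_swap (z w s : point R) : orient w z s = - orient z w s.
Proof. rewrite /orient; ring. Qed.

Lemma halving_sym (X : seq (point R)) z w : halving X z w -> halving X w z.
Proof.
rewrite /halving => /and5P [zX wX zw c1 c2]; rewrite wX zX eq_sym zw /=.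
apply/andP; split.
- by rewrite -(eqP c2); apply/eqP/eq_count => s; rewrite orient_swap oppr_gt0.
- by rewrite -(eqP c1); apply/eqP/eq_count => s; rewrite orient_swap oppr_lt0.
Qed.

Lemma comp_closed z w : halving P z w -> (z \in A) = (w \in A).
Proof.
have cl : forall z w, halving P z w -> z \in A -> w \in A.
  move=> z' w' hv zA; case: uc => _ Huc; apply: (Huc z' w' zA); split; first by case/and5P: hv.
  by exists [:: w']; rewrite /= /adj hv.
move=> hv; apply/idP/idP; [exact: cl | apply: cl; exact: halving_sym].
Qed.


Lemma exists_between (s : seq R) (a c : R) : a < c -> exists m, [/\ a < m, m < c & m \notin s].
Proof.
move=> ac.
pose ms := [seq a + (c - a) / (k.+2)%:R | k <- iota 0 (size s).+1].
have ca : 0 < c - a by rewrite subr_gt0.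
have inI : forall k : nat, a < a + (c - a) / (k.+2)%:R < c.
  move=> k; apply/andP; split.
  - by rewrite ltrDl divr_gt0 // ltr0n.
  - rewrite -ltrBrDl ltr_pdivrMr ?ltr0n // ltr_pMr //.
    by rewrite ltr1n.
case: (boolP (all (fun m => m \in s) ms)) => [H|/allPn [m mm ns]]; last first.
  move/mapP: mm => [k _ E]; rewrite E in ns; have /andP [h1 h2] := inI k.
  by exists (a + (c - a) / (k.+2)%:R); split.
exfalso.
have um : uniq ms.
  rewrite map_inj_uniq ?iota_uniq // => i j /addrI.
  move/(mulfI (lt0r_neq0 ca))/invr_inj/eqP; rewrite eqr_nat => /eqP; by case.
have := uniq_leq_size um (fun m mm => (allP H) m mm).
by rewrite size_map size_iota ltnn.
Qed.

Lemma small_pos (s : seq R) : exists t, 0 < t /\ forall y, y \in s -> ~~ ((0 < y) && (y <= t)).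
Proof.
elim: s => [|y s [t [t0 H]]]; first by exists 1; split.
case: (boolP (0 < y)) => y0.
- exists (Num.min t (y / 2)); split.
  + by rewrite lt_min t0 divr_gt0.
  + move=> z; rewrite inE => /orP [/eqP ->|zs].
    * rewrite y0 /= le_min negb_and; apply/orP; right.
      by rewrite -ltNge ltr_pdivrMr // ltr_pMr // ltr1n.
    * apply/negP => /andP [z0 zt]; move: (H z zs); rewrite z0 /=.
      by rewrite (le_trans zt) // ge_min lexx.
- exists t; split => // z; rewrite inE => /orP [/eqP ->|zs]; first by rewrite (negbTE y0).
  exact: H.
Qed.

Lemma size_lt_sub (T : eqType) (s1 s2 : seq T) e :
  uniq s1 -> {subset s1 <= s2} -> e \in s2 -> e \notin s1 -> (size s1 < size s2)%N.
Proof.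
move=> u1 sub e2 e1; have := @uniq_leq_size _ (e :: s1) s2.
rewrite /= e1 u1 => /(_ isT); apply => z; rewrite inE => /orP [/eqP ->|]; first by [].
exact: sub.
Qed.

Section Family.
Variables b d : R * R.
Hypothesis hdet : det b d != 0.

Definition ft (t : R) (x : point R) := lin b x + t * lin d x.
Definition gt (t : R) : R * R := (b.1 + t * d.1, b.2 + t * d.2).
Lemma lin_gt t x : lin (gt t) x = ft t x.
Proof. rewrite /ft /lin /=; ring. Qed.

Lemma gt_nz t : ((gt t).1 != 0) || ((gt t).2 != 0).
Proof.
apply: contraTT hdet; rewrite negb_or !negbK /= => /andP [/eqP e1 /eqP e2].
rewrite /det; apply/eqP.
have -> : b.1 = - (t * d.1) by apply/eqP; rewrite -subr_eq0 opprK e1.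
have -> : b.2 = - (t * d.2) by apply/eqP; rewrite -subr_eq0 opprK e2.
ring.
Qed.

Definition root (p q : point R) := - (lin b p - lin b q) / (lin d p - lin d q).
Definition crits := [seq root p q | p <- P, q <- P].

Lemma ft_diff t p q : ft t p - ft t q = (lin b p - lin b q) + t * (lin d p - lin d q).
Proof. rewrite /ft; ring. Qed.

Lemma tie_root t p q : p \in P -> q \in P -> p != q -> ft t p = ft t q -> t \in crits.
Proof.
move=> pP qP pq e.
have e0 : (lin b p - lin b q) + t * (lin d p - lin d q) = 0 by rewrite -ft_diff e subrr.
suff -> : t = root p q by apply: allpairs_f.
case: (eqVneq (lin d p - lin d q) 0) => [dz|dn].
- exfalso; move: e0; rewrite dz mulr0 addr0 => bz.
  move: pq; clear e; case: p {pP} bz dz => p1 p2; case: q {qP} => q1 q2.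
  rewrite /lin /= => bz dz.
  have Hb : b.1 * (p1 - q1) + b.2 * (p2 - q2) = 0 by rewrite -bz; ring.
  have Hd : d.1 * (p1 - q1) + d.2 * (p2 - q2) = 0 by rewrite -dz; ring.
  have u1 : p1 - q1 = 0.
    apply: (mulfI hdet); rewrite mulr0.
    have -> : det b d * (p1 - q1) = d.2 * (b.1 * (p1 - q1) + b.2 * (p2 - q2)) - b.2 * (d.1 * (p1 - q1) + d.2 * (p2 - q2)) by rewrite /det; ring.
    by rewrite Hb Hd; ring.
  have u2 : p2 - q2 = 0.
    apply: (mulfI hdet); rewrite mulr0.
    have -> : det b d * (p2 - q2) = b.1 * (d.1 * (p1 - q1) + d.2 * (p2 - q2)) - d.1 * (b.1 * (p1 - q1) + b.2 * (p2 - q2)) by rewrite /det; ring.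
    by rewrite Hb Hd; ring.
  move/eqP: u1; move/eqP: u2; rewrite !subr_eq0 => /eqP -> /eqP ->.
  by rewrite eqxx.
- rewrite /root; apply: (mulIf dn); rewrite divfK //.
  by apply/eqP; rewrite -subr_eq0 opprK addrC; apply/eqP.
Qed.

Lemma gen_notin t : t \notin crits -> gen (ft t).
Proof. move=> nc p q pP qP pq; apply/eqP => e; by rewrite (tie_root pP qP pq e) in nc. Qed.

Lemma sign_change t0 t1 p q : t0 < t1 -> ft t0 p != ft t0 q -> ft t1 p != ft t1 q ->
  (ft t0 p < ft t0 q) != (ft t1 p < ft t1 q) ->
  exists r, [/\ t0 < r, r < t1 & ft r p = ft r q].
Proof.
move=> lt n0 n1 ch.
have H := @affine_root R (lin b p - lin b q) (lin d p - lin d q) t0 t1 lt.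
rewrite -!ft_diff !subr_eq0 !subr_lt0 in H.
have [r [h1 h2 h3]] := H n0 n1 ch.
exists r; split => //; apply/eqP; rewrite -subr_eq0 ft_diff h3 //.
Qed.


Lemma lt_flip (a c : R) : a != c -> (c < a) = ~~ (a < c).
Proof. by move=> ac; rewrite ltNge le_eqVlt (negbTE ac). Qed.

Section Single.
Variables t0 t1 x : R.
Hypothesis lt01 : t0 < t1.
Hypothesis gen0 : gen (ft t0).
Hypothesis gen1 : gen (ft t1).
Hypothesis hx : forall y, y \in crits -> t0 < y -> y < t1 -> y = x.

Definition ch z w := ((ft t0 z < ft t0 w) != (ft t1 z < ft t1 w)) ||
                     ((ft t0 w < ft t0 z) != (ft t1 w < ft t1 z)).

Lemma chC z w : ch z w = ch w z. Proof. by rewrite /ch orbC. Qed.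

Lemma ch_neq z w : ch z w -> z != w.
Proof. by case: (eqVneq z w) => [->|//]; rewrite /ch !ltxx. Qed.

Lemma ch_first z w : z \in P -> w \in P -> z != w ->
  ch z w = ((ft t0 z < ft t0 w) != (ft t1 z < ft t1 w)).
Proof.
move=> zP wP zw; rewrite /ch (lt_flip (gen0 zP wP zw)) (lt_flip (gen1 zP wP zw)).
by case: (_ < _); case: (_ < _).
Qed.

Lemma ch_tie z w : z \in P -> w \in P -> ch z w ->
  [/\ ft x z = ft x w, t0 < x & x < t1].
Proof.
move=> zP wP c; have zw := ch_neq c; rewrite ch_first // in c.
have [r [h1 h2 h3]] := sign_change lt01 (gen0 zP wP zw) (gen1 zP wP zw) c.
have rc := tie_root zP wP zw h3.
by have E := hx rc h1 h2; subst r.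
Qed.

Lemma partner z w s : z \in P -> w \in P -> s \in P -> ch z w -> ch z s -> w = s.
Proof.
move=> zP wP sP c1 c2; apply/eqP; apply/negP => /negP ws.
have [e1 _ _] := ch_tie zP wP c1; have [e2 _ _] := ch_tie zP sP c2.
have := gp zP wP sP (ch_neq c1) ws (ch_neq c2).
rewrite (@collinear_of _ (gt x)) ?eqxx // ?gt_nz // !lin_gt //.
Qed.

Lemma pres s y : s \in P -> y \in P -> ~~ ch s y ->
  (ft t0 s < ft t0 y) = (ft t1 s < ft t1 y).
Proof.
move=> sP yP; case: (eqVneq s y) => [->|sy]; first by rewrite !ltxx.
by rewrite ch_first // negbK => /eqP.
Qed.

Lemma RN y : y \in P -> (forall w, w \in P -> ~~ ch y w) -> rk (ft t1) y = rk (ft t0) y.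
Proof.
move=> yP H; apply: eq_in_count => s sP /=; rewrite (pres sP yP) //.
by rewrite chC; apply: H.
Qed.

Lemma RB y w : y \in P -> w \in P -> ch y w -> ft t0 y < ft t0 w ->
  [/\ rk (ft t1) y = (rk (ft t0) y).+1, rk (ft t0) w = (rk (ft t0) y).+1 &
      rk (ft t1) w = rk (ft t0) y].
Proof.
move=> yP wP c lt; have yw := ch_neq c.
have g1wy : ft t1 w < ft t1 y.
  have c' : (ft t1 y < ft t1 w) = false by move: (c); rewrite ch_first // lt; case: (_ < _).
  by rewrite (lt_flip (gen1 yP wP yw)) c'.
have g0wy : ft t0 w < ft t0 y = false.
  by rewrite (lt_flip (gen0 yP wP yw)) lt.
have nys : forall s, s \in P -> s != w -> ~~ ch s y.
  move=> s sP sw; rewrite chC; apply/negP => c2.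
  by have := partner yP wP sP c c2 => E; rewrite E eqxx in sw.
have nws : forall s, s \in P -> s != y -> ~~ ch s w.
  move=> s sP sy; rewrite chC; apply/negP => c2.
  have c' : ch w y by rewrite chC.
  by have := partner wP yP sP c' c2 => E; rewrite E eqxx in sy.
split.
- apply: (count_exc uP wP) => //; first by rewrite g0wy.
  move=> s sP sw; case: (eqVneq s y) => [->|sy]; first by rewrite !ltxx.
  by rewrite (pres sP yP (nys s sP sw)).
- apply: (count_exc uP yP) => //; first by rewrite ltxx.
  move=> s sP sy; case: (eqVneq s w) => [->|sw]; first by rewrite ltxx g0wy.
  have p1 := pres sP yP (nys s sP sw); have p2 := pres sP wP (nws s sP sy).
  case: (boolP (ft t0 s < ft t0 y)) => h; first by rewrite (lt_trans h lt).
  apply/negP => h2; have h' : ft t1 y < ft t1 s by rewrite (lt_flip (gen1 sP yP sy)) -p1.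
  by move: h2; rewrite p2 => h2; have := lt_trans h' (lt_trans h2 g1wy); rewrite ltxx.
- apply: eq_in_count => s sP /=.
  case: (eqVneq s y) => [->|sy]; first by rewrite ltxx; apply/negbTE; rewrite -(lt_flip (gen1 yP wP yw)) g1wy.
  case: (eqVneq s w) => [->|sw]; first by rewrite ltxx g0wy.
  have p1 := pres sP yP (nys s sP sw); have p2 := pres sP wP (nws s sP sy).
  apply/idP/idP => h.
  + by rewrite p1 (lt_trans h g1wy).
  + by rewrite -p2 (lt_trans h lt).
Qed.


Lemma notie3 z w s : z \in P -> w \in P -> s \in P -> ch z w -> s != z -> s != w ->
  ft x s != ft x z.
Proof.
move=> zP wP sP c sz sw; apply/eqP => e.
have [e1 _ _] := ch_tie zP wP c.
have ws : w != s by rewrite eq_sym.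
have zs : z != s by rewrite eq_sym.
have := gp zP wP sP (ch_neq c) ws zs.
by rewrite (@collinear_of _ (gt x)) ?eqxx // ?gt_nz // !lin_gt.
Qed.

Lemma pres_x z w s : z \in P -> w \in P -> s \in P -> ch z w -> ft x s != ft x z ->
  (ft t0 s < ft t0 z) = (ft x s < ft x z).
Proof.
move=> zP wP sP c nt; have [_ tx xt] := ch_tie zP wP c.
have sz : s != z by apply: contra nt => /eqP ->.
apply/eqP; apply/negP => /negP ne.
have [r [h1 h2 h3]] := sign_change tx (gen0 sP zP sz) nt ne.
have rc := tie_root sP zP sz h3.
have := hx rc h1 (lt_trans h2 xt) => E; subst r; by rewrite ltxx in h2.
Qed.

Lemma HV z w : z \in P -> w \in P -> ch z w -> ft t0 z < ft t0 w ->
  (rk (ft t0) z).+1 = hh -> halving P z w.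
Proof.
move=> zP wP c lt rkz; have zw := ch_neq c.
have [tie tx xt] := ch_tie zP wP c.
have cl : count (fun s => ft x s < ft x z) P = rk (ft t0) z.
  apply: eq_in_count => s sP /=.
  case: (eqVneq s z) => [->|sz]; first by rewrite !ltxx.
  case: (eqVneq s w) => [->|sw]; first by rewrite tie ltxx (lt_flip (gen0 zP wP zw)) lt.
  by rewrite (pres_x zP wP sP c (notie3 zP wP sP c sz sw)).
have ce : count (fun s => ft x s == ft x z) P = 2%N.
  transitivity (count (predU (pred1 z) (pred1 w)) P).
    apply: eq_in_count => s sP /=.
    case: (eqVneq s z) => [->|sz]; first by rewrite eqxx.
    case: (eqVneq s w) => [->|sw]; first by rewrite tie eqxx.
    by rewrite (negbTE (notie3 zP wP sP c sz sw)).
  have := count_predUI (pred1 z) (pred1 w) P.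
  rewrite (@eq_count _ (predI _ _) pred0); last first.
    by move=> s /=; case: (eqVneq s z) => // ->; rewrite (negbTE zw).
  rewrite count_pred0 addn0 => ->.
  by rewrite !count_uniq_mem // zP wP.
have ct := count_tri (ft x) z P; rewrite cl ce in ct.
have sz2 := sizeP2.
have tie' : lin (gt x) z = lin (gt x) w by rewrite !lin_gt.
have [k [kn kE]] := kappa_of (gt_nz x) zw tie'.
have kE' : forall s, ft x s - ft x z = k * orient z w s by move=> s; rewrite -!lin_gt kE.
have Hlt : forall s, (ft x s < ft x z) = (ft x s - ft x z < 0) by move=> s; rewrite subr_lt0.
have Hgt : forall s, (ft x z < ft x s) = (0 < ft x s - ft x z) by move=> s; rewrite subr_gt0.
rewrite /halving zP wP zw /=.
case: (ltgtP k 0) => kl; last by rewrite kl eqxx in kn.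
- have c1 : count (fun s => 0 < orient z w s) P = count (fun s => ft x s < ft x z) P.
    by apply: eq_count => s /=; rewrite Hlt kE' nmulr_rlt0.
  have c2 : count (fun s => orient z w s < 0) P = count (fun s => ft x z < ft x s) P.
    by apply: eq_count => s /=; rewrite Hgt kE' nmulr_rgt0.
  rewrite c1 c2 cl; have [E1 E2] := arith_hv ct sz2 rkz; by rewrite E1 E2 !eqxx.
- have c1 : count (fun s => 0 < orient z w s) P = count (fun s => ft x z < ft x s) P.
    by apply: eq_count => s /=; rewrite Hgt kE' pmulr_rgt0.
  have c2 : count (fun s => orient z w s < 0) P = count (fun s => ft x s < ft x z) P.
    by apply: eq_count => s /=; rewrite Hlt kE' pmulr_rlt0.
  rewrite c1 c2 cl; have [E1 E2] := arith_hv ct sz2 rkz; by rewrite E1 E2 !eqxx.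
Qed.

Lemma LOC y : y \in P -> ((rk (ft t1) y < hh)%N = (rk (ft t0) y < hh)%N) \/
  exists l u, [/\ l \in P, u \in P, ch l u, ft t0 l < ft t0 u &
                 (rk (ft t0) l).+1 = hh /\ (y = l \/ y = u)].
Proof.
move=> yP.
case: (boolP (has (ch y) P)) => [/hasP [w wP c] | nh].
- have yw := ch_neq c.
  case: (ltgtP (ft t0 y) (ft t0 w)) => [lt|gt|eq]; last by move: (gen0 yP wP yw); rewrite eq eqxx.
  + have [E1 _ _] := RB yP wP c lt.
    case: (eqVneq (rk (ft t0) y).+1 hh) => [e|ne].
    * right; exists y, w; split => //; split => //; by left.
    * left; by rewrite E1 ltS_ne.
  + have c' : ch w y by rewrite chC.
    have [E1 E2 E3] := RB wP yP c' gt.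
    case: (eqVneq (rk (ft t0) w).+1 hh) => [e|ne].
    * right; exists w, y; split => //; split => //; by right.
    * left; by rewrite E3 E2 ltS_ne.
- left; rewrite RN //; move=> w wP; apply/negP => c; move/hasP: nh; apply; by exists w.
Qed.

Lemma single : cA (ft t0) = cA (ft t1).
Proof.
case: (classic (exists z w, [/\ z \in P, w \in P, ch z w, ft t0 z < ft t0 w &
                                 (rk (ft t0) z).+1 = hh])) => [[z [w [zP wP c lt rkz]]] | nE].
- have hv := HV zP wP c lt rkz; have cAw := comp_closed hv.
  have [E1 E2 E3] := RB zP wP c lt.
  have oth : forall y, y \in P -> y != z -> y != w ->
      (rk (ft t1) y < hh)%N = (rk (ft t0) y < hh)%N.
    move=> y yP yz yw; case: (LOC yP) => // [[l [u [lP uP2 c2 lt2 [rkl yl]]]]].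
    have lz : l = z by apply: (rk_inj gen0 lP zP); apply: succn_inj; rewrite rkl rkz.
    subst l; have uw : u = w by apply: (partner zP uP2 wP c2 c).
    subst u; by case: yl => e; [rewrite e eqxx in yz | rewrite e eqxx in yw].
  rewrite /cA.
  case: (boolP (z \in A)) => zA.
  + have wA : w \in A by rewrite -cAw.
    pose m := fun y => (y != z) && (rk (ft t0) y < hh)%N.
    have Hq : count (fun y => (rk (ft t0) y < hh)%N) A = (count m A).+1.
      apply: (count_exc uA zA) => /=.
      * by rewrite -rkz ltnSn.
      * by rewrite /m eqxx.
      * by move=> y _ yz; rewrite /m yz.
    have Hp : count (fun y => (rk (ft t1) y < hh)%N) A = (count m A).+1.
      apply: (count_exc uA wA) => /=.
      * by rewrite E3 -rkz ltnSn.
      * by rewrite /m E2 rkz ltnn andbF.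
      * move=> y yA yw; rewrite /m; case: (eqVneq y z) => [->|yz] /=; first by rewrite E1 rkz ltnn.
        by rewrite oth // (AsubP yA).
    by rewrite Hq Hp.
  + have wA : w \notin A by rewrite -cAw.
    apply: eq_in_count => y yA /=; rewrite oth ?(AsubP yA) //.
    * by apply: contraTneq yA => ->.
    * by apply: contraTneq yA => ->.
- apply: eq_in_count => y yA /=; have yP := AsubP yA.
  case: (LOC yP) => [->//|[l [u [lP uP2 c2 lt2 [rkl _]]]]].
  by exfalso; apply: nE; exists l, u.
Qed.

End Single.

Definition Sint u v := undup [seq y <- crits | (u < y) && (y < v)].

Lemma mem_Sint u v y : (y \in Sint u v) = [&& y \in crits, u < y & y < v].
Proof. by rewrite /Sint mem_undup mem_filter andbC andbA. Qed.

Lemma path_ind N : forall t0 t1, (size (Sint t0 t1) <= N)%N -> t0 < t1 ->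
  gen (ft t0) -> gen (ft t1) -> cA (ft t0) = cA (ft t1).
Proof.
elim: N => [|N IH] t0 t1 sz lt g0 g1;
  (case: (boolP (all (fun y => y == head 0 (Sint t0 t1)) (Sint t0 t1))) => [allh|nall]);
  [ | by move: sz; rewrite leqn0 => /nilP E; rewrite E in nall
    | | ].
- apply: (@single t0 t1 (head 0 (Sint t0 t1))) => // y yc h1 h2.
  apply/eqP; apply: (allP allh); by rewrite mem_Sint yc h1 h2.
- apply: (@single t0 t1 (head 0 (Sint t0 t1))) => // y yc h1 h2.
  apply/eqP; apply: (allP allh); by rewrite mem_Sint yc h1 h2.
- have claim : forall a c, a \in Sint t0 t1 -> c \in Sint t0 t1 -> a < c ->
      cA (ft t0) = cA (ft t1).
    move=> a c; rewrite !mem_Sint => /and3P [ac a0 a1] /and3P [cc c0 c1] lac.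
    have [m [am mc mn]] := exists_between crits lac.
    have gm := gen_notin mn.
    have t0m : t0 < m by apply: lt_trans a0 am.
    have mt1 : m < t1 by apply: lt_trans mc c1.
    rewrite (IH t0 m) ?(IH m t1) //.
    + rewrite -ltnS; apply: leq_trans sz; apply: (@size_lt_sub _ _ _ a).
      * exact: undup_uniq.
      * move=> z; rewrite !mem_Sint => /and3P [-> mz ->]; by rewrite (lt_trans t0m mz).
      * by rewrite mem_Sint ac a0 a1.
      * by rewrite mem_Sint ltNge (ltW am) /= andbF.
    + rewrite -ltnS; apply: leq_trans sz; apply: (@size_lt_sub _ _ _ c).
      * exact: undup_uniq.
      * move=> z; rewrite !mem_Sint => /and3P [-> -> zm]; by rewrite (lt_trans zm mt1).
      * by rewrite mem_Sint cc c0 c1.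
      * by rewrite mem_Sint (ltNge c m) (ltW mc) /= !andbF.
  case/allPn: nall => y yS /= ny.
  have hS : head 0 (Sint t0 t1) \in Sint t0 t1.
    by move: yS; case: (Sint t0 t1) => // u l _; rewrite /= mem_head.
  case: (ltgtP y (head 0 (Sint t0 t1))) => [l|l|e]; last by rewrite e eqxx in ny.
  + exact: (claim _ _ yS hS l).
  + exact: (claim _ _ hS yS l).
Qed.

End Family.
Lemma gen_ext f f' : f =1 f' -> gen f -> gen f'.
Proof. by move=> E gf p q pP qP pq; rewrite -!E; apply: gf. Qed.

Lemma connect (g g' : R * R) : det g g' != 0 -> gen (lin g) -> gen (lin g') ->
  cA (lin g) = cA (lin g').
Proof.
move=> dt gg gg'.
pose d := (g'.1 - g.1, g'.2 - g.2).
have dd : det g d != 0 by rewrite /det /d /=; rewrite (_ : _ - _ = det g g') // /det; ring.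
have E0 : ft g d 0 =1 lin g by move=> z; rewrite /ft mul0r addr0.
have E1 : ft g d 1 =1 lin g' by move=> z; rewrite /ft /lin /d /= mul1r; ring.
rewrite -(cA_ext E0) -(cA_ext E1).
apply: (@path_ind g d dd (size (Sint g d 0 1)) 0 1).
- exact: leqnn.
- exact: ltr01.
- apply: gen_ext gg => z; by rewrite E0.
- apply: gen_ext gg' => z; by rewrite E1.
Qed.

Lemma sumsq_neq0 (u v : R) : (u != 0) || (v != 0) -> u * u + v * v != 0.
Proof.
move=> nz; rewrite paddr_eq0; last 2 first.
- by rewrite -expr2 sqr_ge0.
- by rewrite -expr2 sqr_ge0.
case/orP: nz => n; apply/negP => /andP [h1 h2].
- by move: h1; rewrite mulf_eq0 orbb (negbTE n).
- by move: h2; rewrite mulf_eq0 orbb (negbTE n).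
Qed.

Lemma half (g : R * R) : (g.1 != 0) || (g.2 != 0) -> gen (lin g) ->
  ((cA (lin g)).*2 = size A)%N.
Proof.
move=> gnz gg.
pose gq := (- g.2, g.1).
have dp : det gq g != 0.
  rewrite /det /gq /= (_ : _ - _ = - (g.1 * g.1 + g.2 * g.2)); last by ring.
  by rewrite oppr_eq0 sumsq_neq0.
have [s [_ _ sn]] := exists_between (crits gq g) ltr01.
pose k := gt gq g s.
have gk : gen (lin k) by apply: gen_ext (gen_notin dp sn) => z; rewrite lin_gt.
have d1 : det g k != 0.
  rewrite /det /k /gt /gq /= (_ : _ - _ = g.1 * g.1 + g.2 * g.2); last by ring.
  exact: sumsq_neq0.
pose ng := (- g.1, - g.2).
have Eng : lin ng =1 (fun x => - lin g x) by move=> z; rewrite /lin /ng /=; ring.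
have gng : gen (lin ng) by apply: gen_ext (gen_neg gg) => z; rewrite Eng.
have d2 : det ng k != 0.
  rewrite /det /k /gt /gq /ng /= (_ : _ - _ = - (g.1 * g.1 + g.2 * g.2)); last by ring.
  by rewrite oppr_eq0 sumsq_neq0.
have e1 := connect d1 gg gk; have e2 := connect d2 gng gk.
rewrite (cA_ext Eng) cA_neg // e1 in e2.
have := count_size (fun z => (rk (lin k) z < hh)%N) A.
rewrite /cA in e1 e2 *; rewrite e1; move: e2; move: (count _ A) => c; lia.
Qed.

Lemma evenA : ~~ odd (size A).
Proof.
pose b0 : R * R := (0, 1); pose d0 : R * R := (1, 0).
have dd : det b0 d0 != 0 by rewrite /det /= mul0r mulr1 sub0r oppr_eq0 oner_eq0.
have [s [_ _ sn]] := exists_between (crits b0 d0) ltr01.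
have gk : gen (lin (gt b0 d0 s)) by apply: gen_ext (gen_notin dd sn) => z; rewrite lin_gt.
have := half (gt_nz dd s) gk => <-.
by rewrite odd_double.
Qed.

Lemma halving_low (X : seq (point R)) a b : uniq X -> {subset X <= P} ->
  a \in X -> b \in X -> a != b -> ~~ odd (size X) ->
  halving X a b = (count (fun s => orient a b s < 0) X == ((size X - 2) %/ 2)%N).
Proof.
move=> uX sX aX bX ab od.
have ct := count_tri (orient a b) a X.
have oa : orient a b a = 0 by rewrite /orient; ring.
have ob : orient a b b = 0 by rewrite /orient; ring.
rewrite oa in ct.
have ce : count (fun y => orient a b y == 0) X = 2%N.
  transitivity (count (predU (pred1 a) (pred1 b)) X).
    apply: eq_in_count => s sX0 /=.
    case: (eqVneq s a) => [->|sa]; first by rewrite oa eqxx.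
    case: (eqVneq s b) => [->|sb]; first by rewrite ob eqxx.
    have := gp (sX a aX) (sX b bX) (sX s sX0) ab; rewrite eq_sym sb eq_sym sa => /(_ isT isT).
    by move/negbTE.
  have := count_predUI (pred1 a) (pred1 b) X.
  rewrite (@eq_count _ (predI _ _) pred0); last first.
    by move=> s /=; case: (eqVneq s a) => // ->; rewrite (negbTE ab).
  rewrite count_pred0 addn0 => ->.
  by rewrite !count_uniq_mem // aX bX.
rewrite ce in ct.
rewrite /halving aX bX ab /=.
exact: arith2 ct od.
Qed.

Lemma halving_equiv a b : a \in A -> b \in A -> halving A a b = halving P a b.
Proof.
move=> aA bA; case: (eqVneq a b) => [<-|ab]; first by rewrite /halving !eqxx /= !andbF.
have aP := AsubP aA; have bP := AsubP bA.
rewrite (halving_low uA AsubP aA bA ab evenA) (halving_low uP (fun _ h => h) aP bP ab evP).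
have ab2 : (b.1 - a.1 != 0) || (b.2 - a.2 != 0).
  apply: contraNT ab; rewrite negb_or !negbK !subr_eq0 => /andP [/eqP e1 /eqP e2].
  by move: e1 e2; case: a {aA aP} => a1 a2; case: b {bA bP} => b1 b2 /= -> ->.
pose bb : R * R := (- (b.2 - a.2), b.1 - a.1); pose dd : R * R := (b.1 - a.1, b.2 - a.2).
have sq := sumsq_neq0 ab2.
have sqp : 0 < (b.1 - a.1) * (b.1 - a.1) + (b.2 - a.2) * (b.2 - a.2).
  by rewrite lt0r sq /= addr_ge0 // -expr2 sqr_ge0.
have hd : det bb dd != 0.
  rewrite /det /bb /dd /= (_ : _ - _ = - ((b.1 - a.1) * (b.1 - a.1) + (b.2 - a.2) * (b.2 - a.2))); last by ring.
  by rewrite oppr_eq0.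
have [tp [tp0 Htp]] := small_pos (crits bb dd).
have tpn : tp \notin crits bb dd.
  by apply/negP => m; have := Htp _ m; rewrite tp0 lexx.
have gfp : gen (ft bb dd tp) := gen_notin hd tpn.
have E0 : forall s, ft bb dd 0 s - ft bb dd 0 a = orient a b s.
  by move=> s; rewrite /ft /lin /orient /bb /=; ring.
have f0b : ft bb dd 0 b = ft bb dd 0 a.
  by apply/eqP; rewrite -subr_eq0 E0 /orient; apply/eqP; ring.
have fab : ft bb dd tp a < ft bb dd tp b.
  rewrite -subr_lt0 ft_diff (_ : _ + _ = - (tp * ((b.1 - a.1) * (b.1 - a.1) + (b.2 - a.2) * (b.2 - a.2)))).
    by rewrite oppr_lt0 mulr_gt0.
  by rewrite /lin /bb /dd /=; ring.
have pres : forall s p, s \in P -> p \in P -> ft bb dd 0 s != ft bb dd 0 p ->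
    (ft bb dd tp s < ft bb dd tp p) = (ft bb dd 0 s < ft bb dd 0 p).
  move=> s p sP pP n0.
  have sp : s != p by apply: contra n0 => /eqP ->.
  apply/eqP; rewrite eq_sym; apply/negP => /negP ne.
  have [r [h1 h2 h3]] := sign_change tp0 n0 (gfp s p sP pP sp) ne.
  have := Htp _ (tie_root hd sP pP sp h3); by rewrite h1 (ltW h2).
have nt : forall s, s \in P -> s != a -> s != b -> ft bb dd 0 s != ft bb dd 0 a.
  move=> s sP sa sb; rewrite -subr_eq0 E0.
  by apply: gp => //; rewrite eq_sym.
pose LP := count (fun s => ft bb dd 0 s < ft bb dd 0 a) P.
have rka : rk (ft bb dd tp) a = LP.
  apply: eq_in_count => s sP /=.
  case: (eqVneq s a) => [->|sa]; first by rewrite !ltxx.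
  case: (eqVneq s b) => [->|sb]; first by rewrite f0b ltxx; apply/negbTE; rewrite -leNgt ltW.
  by rewrite pres // nt.
have rkb : rk (ft bb dd tp) b = LP.+1.
  apply: (count_exc uP aP) => //=; first by rewrite ltxx.
  move=> s sP sa; case: (eqVneq s b) => [->|sb] /=; first by rewrite f0b !ltxx.
  rewrite pres //; first by rewrite f0b.
  by rewrite f0b nt.
have below : forall z, z \in P -> z != a -> z != b -> ft bb dd 0 z < ft bb dd 0 a ->
    (rk (ft bb dd tp) z < LP)%N.
  move=> z zP za zb lt; rewrite -rka; apply: rk_mono => //; by rewrite pres // nt.
have above : forall z, z \in P -> z != a -> z != b -> ~~ (ft bb dd 0 z < ft bb dd 0 a) ->
    (LP.+1 < rk (ft bb dd tp) z)%N.
  move=> z zP za zb nl; rewrite -rkb; apply: rk_mono => //.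
  have ne : ft bb dd 0 b != ft bb dd 0 z by rewrite f0b eq_sym nt.
  rewrite pres // f0b (lt_flip (nt z zP za zb)) //.
have K : ((cA (ft bb dd tp)).*2 = size A)%N.
  rewrite -(half (gt_nz hd tp)); last by apply: gen_ext gfp => z; rewrite lin_gt.
  by rewrite (cA_ext (lin_gt bb dd tp)).
have cvA : count (fun s => orient a b s < 0) A = count (fun s => ft bb dd 0 s < ft bb dd 0 a) A.
  by apply: eq_count => s /=; rewrite -E0 subr_lt0.
have cvP : count (fun s => orient a b s < 0) P = LP.
  by apply: eq_count => s /=; rewrite -E0 subr_lt0.
rewrite cvA cvP.
pose lowA := count (fun s => ft bb dd 0 s < ft bb dd 0 a) A.
have sA2 : (2 <= size A)%N.
  have := @uniq_leq_size _ [:: a; b] A; rewrite /= inE (negbTE ab) /= => /(_ isT); apply.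
  by move=> z; rewrite !inE => /orP [/eqP ->|/eqP ->].
have sP2 : (2 <= size P)%N.
  have := @uniq_leq_size _ [:: a; b] P; rewrite /= inE (negbTE ab) /= => /(_ isT); apply.
  by move=> z; rewrite !inE => /orP [/eqP ->|/eqP ->].
apply: (@arith3 LP hh lowA (cA (ft bb dd tp))).
- exact: sizeP2.
- by rewrite -K -muln2 mulnC.
- by move: sA2; rewrite -K; case: (cA _).
- by move: sP2; rewrite sizeP2; case: hh.
- move=> e; rewrite /cA /lowA; apply: (count_exc uA aA) => /=.
  + by rewrite rka -e ltnSn.
  + by rewrite ltxx.
  + move=> z zA za; have zP := AsubP zA.
    case: (eqVneq z b) => [->|zb]; first by rewrite rkb -e ltnn f0b ltxx.
    case: (boolP (ft bb dd 0 z < ft bb dd 0 a)) => lt.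
    * by rewrite (ltn_trans (below z zP za zb lt)) // -e.
    * apply/negbTE; rewrite -leqNgt -e; exact: ltnW (above z zP za zb lt).
- move=> H; rewrite /cA /lowA.
  pose m1 := fun z => (ft bb dd 0 z < ft bb dd 0 a) || (z == a).
  pose m2 := fun z => m1 z || (z == b).
  have c1 : count m1 A = lowA.+1.
    apply: (count_exc uA aA) => /=; first by rewrite /m1 eqxx orbT.
    - by rewrite ltxx.
    - by move=> z _ za; rewrite /m1 (negbTE za) orbF.
  have c2 : count m2 A = (count m1 A).+1.
    apply: (count_exc uA bA) => /=; first by rewrite /m2 eqxx orbT.
    - by rewrite /m1 f0b ltxx eq_sym (negbTE ab).
    - by move=> z _ zb; rewrite /m2 (negbTE zb) orbF.
  rewrite -c1 -c2; apply: count_le_in => z zA; have zP := AsubP zA.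
  rewrite /m2 /m1; case: (eqVneq z a) => [->|za]; first by rewrite rka ltnW.
  case: (eqVneq z b) => [->|zb]; first by rewrite rkb.
  rewrite !orbF => lt; exact: ltn_trans (below z zP za zb lt) (ltnW H).
- move=> H; rewrite /cA /lowA; apply: count_le_in => z zA; have zP := AsubP zA.
  case: (eqVneq z a) => [->|za]; first by rewrite rka ltnNge H.
  case: (eqVneq z b) => [->|zb]; first by rewrite rkb ltnNge (leq_trans H).
  case: (boolP (ft bb dd 0 z < ft bb dd 0 a)) => // nl.
  have := above z zP za zb nl => h1 h2.
  by have := ltn_trans h1 h2; rewrite ltnNge (leq_trans H) // leqnSn.
Qed.

End Main.


Theorem mainTheorem5 (R : realFieldType) (P A : seq (point R)) :
  uniq P -> general_position P -> ~~ odd (size P) ->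
  uniq A -> union_of_components P A ->
  ~~ odd (size A) /\
  (forall a b, a \in A -> b \in A -> halving A a b = halving P a b).
Proof.
move=> uP gp evP uA uc; split.
- exact: (evenA uP gp evP uA uc).
- move=> a b aA bA; exact: (halving_equiv uP gp evP uA uc aA bA).
Qed.
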